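(* For every real number $\nu>0$, the set $\mathbb{L}^{(\nu)}$ of $\nu$-Liouville numbers is uncountable.
   Context: A real number $\xi$ is a Liouville number if there exist a sequence of rational numbers $p_k/q_k$ ($p_k,q_k$ integers, $q_k>1$) and a sequence of positive reals $(\omega_k)_k$ with $\omega_k\to\infty$ such that $0<|\xi-p_k/q_k|<q_k^{-\omega_k}$ for all $k$. For a real number $\xi$, let $S(\xi)$ be the set of real numbers $\nu^*\ge 0$ for which there exist a sequence of rationals $p_k/q_k$ (integers $q_k>1$) and a sequence of positive reals $(\omega_k)_k$ such that $0<|\xi-p_k/q_k|<q_k^{-\omega_k}$ for all $k$ and $\omega_k/q_k^{\nu^*}\to\infty$ as $k\to\infty$. For $\nu\in[0,\infty]$, $\xi$ is called a $\nu$-Liouville number if $\xi$ is a Liouville number and $\sup S(\xi)=\nu$; the set of $\nu$-Liouville numbers is denoted $\mathbb{L}^{(\nu)}$. In particular, $\xi$ is an $\infty$-Liouville number iff $S(\xi)=[0,\infty)$. *)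

(* Defs.v *)
From Stdlib Require Import Reals ZArith.
Open Scope R_scope.

Definition tends_to_infty (u : nat -> R) : Prop :=
  forall M : R, exists N : nat, forall k : nat, (N <= k)%nat -> M < u k.

Definition approx_seq (xi : R) (p q : nat -> Z) (omega : nat -> R) : Prop :=
  (forall k, (1 < q k)%Z) /\ (forall k, 0 < omega k) /\
  (forall k, 0 < Rabs (xi - IZR (p k) / IZR (q k)) /\
             Rabs (xi - IZR (p k) / IZR (q k)) < Rpower (IZR (q k)) (- omega k)).

Definition liouville (xi : R) : Prop :=
  exists (p q : nat -> Z) (omega : nat -> R),
    approx_seq xi p q omega /\ tends_to_infty omega.

Definition in_S (xi : R) (nu_star : R) : Prop :=
  0 <= nu_star /\
  exists (p q : nat -> Z) (omega : nat -> R),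
    approx_seq xi p q omega /\
    tends_to_infty (fun k => omega k / Rpower (IZR (q k)) nu_star).

Definition nu_liouville (nu : R) (xi : R) : Prop :=
  liouville xi /\ is_lub (in_S xi) nu.

Definition countable_set (A : R -> Prop) : Prop :=
  exists f : nat -> R, forall x, A x -> exists n, f n = x.

(* Main.v *)
Require Import Defs.
From Stdlib Require Import Reals ZArith Znumtheory Lra Lia ClassicalEpsilon.
Open Scope R_scope.

Definition eN (nu : R) (q : Z) : nat := (Z.to_nat (up (Rpower (IZR q) nu)) + 4)%nat.
Fixpoint Qs (nu:R) (n:nat) : Z := match n with
  | O => 2%Z | S n => (Qs nu n ^ Z.of_nat (eN nu (Qs nu n)))%Z end.
Definition eps (b : nat -> bool) k : Z := if b k then 3%Z else 1%Z.
Fixpoint Ps nu b n : Z := match n with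
  | O => eps b 0
  | S n => (Ps nu b n * Qs nu n ^ (Z.of_nat (eN nu (Qs nu n)) - 1) + eps b (S n))%Z end.
Definition Ss nu b n : R := IZR (Ps nu b n) / IZR (Qs nu n).

Lemma Rpower_pos x y : 0 < Rpower x y.
Proof. unfold Rpower; apply exp_pos. Qed.

Lemma eN_bounds nu q : Rpower (IZR q) nu + 4 < INR (eN nu q) <= Rpower (IZR q) nu + 5.
Proof.
  unfold eN. rewrite plus_INR. destruct (archimed (Rpower (IZR q) nu)) as [H1 H2].
  pose proof (Rpower_pos (IZR q) nu).
  assert (Hu : (0 < up (Rpower (IZR q) nu))%Z) by (apply lt_IZR; lra).
  rewrite INR_IZR_INZ, Z2Nat.id by lia. simpl. lra.
Qed.

Lemma eN_ge4 nu q : (4 <= eN nu q)%nat.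
Proof. unfold eN; lia. Qed.

Lemma Qs_pow2 nu n : exists k, (0 < k)%Z /\ Qs nu n = (2 ^ k)%Z.
Proof.
  induction n as [|n [k [Hk E]]]; simpl.
  - exists 1%Z; split; [lia|reflexivity].
  - rewrite E, <- Z.pow_mul_r by lia. exists (k * Z.of_nat (eN nu (2^k)))%Z.
    pose proof (eN_ge4 nu (2^k)). split; [nia|reflexivity].
Qed.

Lemma Qs_ge2 nu n : (2 <= Qs nu n)%Z.
Proof.
  destruct (Qs_pow2 nu n) as [k [Hk ->]].
  replace 2%Z with (2^1)%Z at 1 by reflexivity. apply Z.pow_le_mono_r; lia.
Qed.

Lemma Qs_ge2R nu n : 2 <= IZR (Qs nu n).
Proof. apply IZR_le, Qs_ge2. Qed.

Lemma Qs_S nu n : IZR (Qs nu (S n)) = IZR (Qs nu n) ^ eN nu (Qs nu n).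
Proof. simpl. rewrite pow_IZR. reflexivity. Qed.

Lemma Qs_growth nu n : IZR (Qs nu n) ^ 4 <= IZR (Qs nu (S n)).
Proof.
  rewrite Qs_S. apply Rle_pow. pose proof (Qs_ge2R nu n); lra. apply eN_ge4.
Qed.

Lemma Qs_growth2 nu n : IZR (Qs nu n) * IZR (Qs nu n) <= IZR (Qs nu (S n))
   /\ 4 * IZR (Qs nu n) <= IZR (Qs nu (S n)).
Proof.
  pose proof (Qs_growth nu n). pose proof (Qs_ge2R nu n).
  set (y := IZR (Qs nu (S n))) in *.
  set (x := IZR (Qs nu n)) in *.
  replace (x^4) with (x*x*(x*x)) in H by ring.
  assert (x*x >= 4) by nra.
  assert (x*x*(x*x) >= 4*(x*x)) by (apply Rle_ge, Rmult_le_compat_r; nra).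
  split; nra.
Qed.

Lemma eps_bounds b k : 1 <= IZR (eps b k) <= 3.
Proof. unfold eps; destruct (b k); split; apply IZR_le; lia. Qed.

Lemma Ss_S nu b n : Ss nu b (S n) = Ss nu b n + IZR (eps b (S n)) / IZR (Qs nu (S n)).
Proof.
  unfold Ss. simpl Ps. 
  assert (E : IZR (Qs nu (S n)) = IZR (Qs nu n ^ (Z.of_nat (eN nu (Qs nu n)) - 1)) * IZR (Qs nu n)).
  { rewrite <- mult_IZR. simpl. f_equal. pose proof (eN_ge4 nu (Qs nu n)). rewrite Z.mul_comm, <- Z.pow_succ_r by lia. f_equal. lia. }
  rewrite E, plus_IZR, mult_IZR.
  pose proof (Qs_ge2R nu n).
  assert (IZR (Qs nu n ^ (Z.of_nat (eN nu (Qs nu n)) - 1)) <> 0).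
  { apply not_0_IZR. apply Z.pow_nonzero. pose proof (Qs_ge2 nu n); lia. pose proof (eN_ge4 nu (Qs nu n)); lia. }
  field. split; lra.
Qed.
Lemma Ss_growing nu b : Un_growing (Ss nu b).
Proof.
  intro n. rewrite Ss_S. pose proof (eps_bounds b (S n)). pose proof (Qs_ge2R nu (S n)).
  assert (0 < IZR (eps b (S n)) / IZR (Qs nu (S n))) by (apply Rdiv_lt_0_compat; lra). lra.
Qed.

Lemma Ss_tail nu b n j : Ss nu b (n + j) + 6 / IZR (Qs nu (S (n + j))) <= Ss nu b n + 6 / IZR (Qs nu (S n)).
Proof.
  induction j.
  - rewrite Nat.add_0_r. lra.
  - replace (n + S j)%nat with (S (n + j)) by lia.
    rewrite Ss_S. pose proof (eps_bounds b (S (n+j))).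
    destruct (Qs_growth2 nu (S (n+j))) as [_ G].
    pose proof (Qs_ge2R nu (S (n+j))).
    set (x := IZR (Qs nu (S (n+j)))) in *. set (y := IZR (Qs nu (S (S (n+j))))) in *.
    set (e := IZR (eps b (S (n + j)))) in *.
    assert (e / x <= 3 / x) by (apply Rmult_le_compat_r; [apply Rlt_le, Rinv_0_lt_compat; lra| lra]).
    assert (6 / y <= 3 / x).
    { apply (Rmult_le_reg_r (x*y)). nra. field_simplify; try lra. }
    lra.
Qed.

Lemma Ss_le nu b n m : (n <= m)%nat -> Ss nu b m <= Ss nu b n + 6 / IZR (Qs nu (S n)).
Proof.
  intro H. replace m with (n + (m - n))%nat by lia.
  pose proof (Ss_tail nu b n (m - n)). pose proof (Qs_ge2R nu (S (n + (m-n)))).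
  assert (0 < 6 / IZR (Qs nu (S (n + (m - n))))) by (apply Rdiv_lt_0_compat; lra). lra.
Qed.

Lemma Ss_ub nu b : has_ub (Ss nu b).
Proof.
  exists (Ss nu b 0 + 6 / IZR (Qs nu 1)). intros x [m ->]. apply Ss_le. lia.
Qed.

Definition xi nu b : R := proj1_sig (growing_cv (Ss nu b) (Ss_growing nu b) (Ss_ub nu b)).

Lemma cv_le (U : nat -> R) l c n : Un_cv U l -> (forall m, (n <= m)%nat -> U m <= c) -> l <= c.
Proof.
  intros H Hb. destruct (Rle_or_lt l c) as [|Hlt]; auto.
  destruct (H (l - c)) as [N HN]. lra.
  specialize (HN (max N n) (Nat.le_max_l _ _)). specialize (Hb (max N n) (Nat.le_max_r _ _)).
  unfold Rdist in HN. apply Rabs_def2 in HN. destruct HN. lra.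
Qed.

Lemma xi_bounds nu b n : Ss nu b n + 1 / IZR (Qs nu (S n)) <= xi nu b <= Ss nu b n + 6 / IZR (Qs nu (S n)).
Proof.
  unfold xi. destruct (growing_cv _ _ _) as [l Hl]. cbn [proj1_sig]. split.
  - pose proof (growing_ineq _ _ (Ss_growing nu b) Hl (S n)). rewrite Ss_S in H.
    pose proof (eps_bounds b (S n)). pose proof (Qs_ge2R nu (S n)).
    assert (1 / IZR (Qs nu (S n)) <= IZR (eps b (S n)) / IZR (Qs nu (S n))).
    { apply Rmult_le_compat_r; [apply Rlt_le, Rinv_0_lt_compat; lra| lra]. }
    lra.
  - apply (cv_le _ _ _ n Hl). intros; apply Ss_le; auto.
Qed.

Lemma arch_nat X : exists N : nat, X < INR N.
Proof.
  destruct (archimed X) as [H1 _]. exists (Z.to_nat (up X)).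
  assert (IZR (up X) <= INR (Z.to_nat (up X))); [|lra].
  rewrite INR_IZR_INZ. apply IZR_le. lia.
Qed.

Lemma ln_le' x y : 0 < x -> x <= y -> ln x <= ln y.
Proof. intros. destruct H0. left; apply ln_increasing; auto. subst; lra. Qed.

Lemma ln_Qs nu k : INR k * ln 2 <= ln (IZR (Qs nu k)).
Proof.
  induction k.
  - simpl. rewrite Rmult_0_l. pose proof (Qs_ge2R nu 0). rewrite <- ln_1. apply ln_le'; lra.
  - rewrite S_INR. destruct (Qs_growth2 nu k) as [_ G]. pose proof (Qs_ge2R nu k).
    assert (ln (2 * IZR (Qs nu k)) <= ln (IZR (Qs nu (S k)))) by (apply ln_le'; lra).
    rewrite ln_mult in H0 by lra. lra.
Qed.

Lemma ln2_pos : 0 < ln 2.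
Proof. rewrite <- ln_1. apply ln_increasing; lra. Qed.

Lemma exp_ge x : 1 + x <= exp x.
Proof. destruct (Req_dec x 0) as [->|H]. rewrite exp_0; lra. left; apply exp_ineq1; auto. Qed.

Lemma Rpower_Qs_infty nu d : 0 < d -> forall M, exists N, forall k, (N <= k)%nat -> M < Rpower (IZR (Qs nu k)) d.
Proof.
  intros Hd M. pose proof ln2_pos.
  destruct (arch_nat (M / (d * ln 2))) as [N HN]. exists N. intros k Hk.
  unfold Rpower. 
  assert (d * ln 2 * INR N <= d * ln (IZR (Qs nu k))).
  { pose proof (ln_Qs nu k). apply le_INR in Hk.
    assert (INR N * ln 2 <= INR k * ln 2) by (apply Rmult_le_compat_r; lra).
    rewrite Rmult_assoc. apply Rmult_le_compat_l; lra. }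
  assert (M < d * ln 2 * INR N).
  { assert (0 < d * ln 2) by (apply Rmult_lt_0_compat; lra).
    apply (Rmult_lt_compat_l (d * ln 2)) in HN; auto.
    replace (d * ln 2 * (M / (d * ln 2))) with M in HN by (field; lra). lra. }
  pose proof (exp_ge (d * ln (IZR (Qs nu k)))). lra.
Qed.

Definition om nu k : R := INR (eN nu (Qs nu k)) - 3.

Lemma Rpower_om nu k : Rpower (IZR (Qs nu k)) (- om nu k) = IZR (Qs nu k) ^ 3 / IZR (Qs nu (S k)).
Proof.
  pose proof (Qs_ge2R nu k). unfold om.
  replace (- (INR (eN nu (Qs nu k)) - 3)) with (INR 3 + - INR (eN nu (Qs nu k))) by (simpl; lra).
  rewrite Rpower_plus, Rpower_Ropp, !Rpower_pow by lra. rewrite Qs_S. reflexivity.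
Qed.

Lemma approx_ok nu b : approx_seq (xi nu b) (Ps nu b) (Qs nu) (om nu).
Proof.
  split; [|split].
  - intro k; pose proof (Qs_ge2 nu k); lia.
  - intro k. unfold om. pose proof (eN_bounds nu (Qs nu k)). pose proof (Rpower_pos (IZR (Qs nu k)) nu). lra.
  - intro k. fold (Ss nu b k). destruct (xi_bounds nu b k) as [L U].
    pose proof (Qs_ge2R nu (S k)). pose proof (Qs_ge2R nu k).
    assert (0 < 1 / IZR (Qs nu (S k))) by (apply Rdiv_lt_0_compat; lra).
    rewrite Rabs_pos_eq by lra. split. lra.
    rewrite Rpower_om. 
    assert (6 / IZR (Qs nu (S k)) < IZR (Qs nu k) ^ 3 / IZR (Qs nu (S k))).
    { apply Rmult_lt_compat_r. apply Rinv_0_lt_compat; lra. simpl. nra. }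
    lra.
Qed.

Lemma Rpower_minus x a c : 0 < x -> Rpower x a / Rpower x c = Rpower x (a - c).
Proof. intros. unfold Rminus. rewrite Rpower_plus, Rpower_Ropp. reflexivity. Qed.

Lemma lower_S nu b nu' : 0 <= nu' < nu -> in_S (xi nu b) nu'.
Proof.
  intros [H0 H1]. split; auto. exists (Ps nu b), (Qs nu), (om nu). split. apply approx_ok.
  intro M. destruct (Rpower_Qs_infty nu (nu - nu') ltac:(lra) M) as [N HN]. exists N. intros k Hk.
  specialize (HN k Hk). pose proof (Qs_ge2R nu k).
  pose proof (Rpower_pos (IZR (Qs nu k)) nu').
  assert (Rpower (IZR (Qs nu k)) nu / Rpower (IZR (Qs nu k)) nu' <= om nu k / Rpower (IZR (Qs nu k)) nu').
  { apply Rmult_le_compat_r. left; apply Rinv_0_lt_compat; lra. unfold om.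
    pose proof (eN_bounds nu (Qs nu k)). lra. }
  rewrite Rpower_minus in H3 by lra. lra.
Qed.

Lemma liouville_xi nu b : 0 < nu -> liouville (xi nu b).
Proof.
  intro Hnu. destruct (lower_S nu b 0 ltac:(lra)) as [_ [p [q [w [A T]]]]].
  exists p, q, w. split; auto. intro M. destruct (T M) as [N HN]. exists N. intros k Hk.
  specialize (HN k Hk). destruct A as [Aq _]. specialize (Aq k). apply IZR_lt in Aq.
  rewrite Rpower_O in HN by lra. rewrite Rdiv_1_r in HN. auto.
Qed.

Lemma find_m nu (qr : R) : 2 <= qr -> exists m, IZR (Qs nu m) <= 144 * qr^2 /\ 12 * qr * IZR (Qs nu m) < IZR (Qs nu (S m)).
Proof.
  intro Hq.
  assert (Hind : forall n, IZR (Qs nu n) <= 144 * qr^2 \/ exists m, IZR (Qs nu m) <= 144 * qr^2 /\ 12 * qr * IZR (Qs nu m) < IZR (Qs nu (S m))).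
  { induction n.
    - left. simpl. nra.
    - destruct IHn as [H|H]; [|right; auto].
      destruct (Rlt_or_le (12 * qr * IZR (Qs nu n)) (IZR (Qs nu (S n)))) as [H2|H2].
      + right; exists n; auto.
      + left. destruct (Qs_growth2 nu n) as [G _]. pose proof (Qs_ge2R nu n). pose proof (Qs_ge2R nu (S n)).
        set (x := IZR (Qs nu n)) in *. set (y := IZR (Qs nu (S n))) in *.
        assert (y * y <= (12*qr*x)*(12*qr*x)) by nra.
        assert ((12*qr*x)*(12*qr*x) = 144 * qr^2 * (x*x)) by ring.
        assert (144 * qr^2 * (x*x) <= 144 * qr^2 * y) by (apply Rmult_le_compat_l; nra).
        nra. }
  destruct (Rpower_Qs_infty nu 1 ltac:(lra) (144 * qr^2)) as [N HN].
  specialize (HN N (Nat.le_refl _)). pose proof (Qs_ge2R nu N). rewrite Rpower_1 in HN by lra.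
  destruct (Hind N) as [H1|H1]; auto. lra.
Qed.

Lemma Rpower_inv_lt x a c : 1 < x -> Rpower x a < Rpower x c -> a < c.
Proof.
  intros H1 H2. destruct (Rlt_or_le a c); auto. assert (Rpower x c <= Rpower x a) by (apply Rle_Rpower; lra). lra.
Qed.

Lemma Rpower_base_le x y a : 0 < x -> x <= y -> 0 <= a -> Rpower x a <= Rpower y a.
Proof.
  intros. unfold Rpower. assert (a * ln x <= a * ln y) by (apply Rmult_le_compat_l; auto; apply ln_le'; auto).
  destruct H2. left; apply exp_increasing; auto. rewrite H2; lra.
Qed.

Lemma Zabs_ge1 z : z <> 0%Z -> 1 <= Rabs (IZR z).
Proof. intro. rewrite Rabs_Zabs. apply IZR_le. lia. Qed.

Lemma Ps_odd nu b n : Z.odd (Ps nu b n) = true.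
Proof.
  induction n; simpl Ps.
  - unfold eps; destruct (b O); reflexivity.
  - rewrite Z.odd_add, Z.odd_mul, IHn.
    destruct (Qs_pow2 nu n) as [k [Hk E]]. pose proof (eN_ge4 nu (Qs nu n)).
    rewrite Z.odd_pow by lia. rewrite E, Z.odd_pow by lia.
    unfold eps; destruct (b (S n)); reflexivity.
Qed.

Lemma Qs_div nu b n p q : (0 < q)%Z -> (p * Qs nu n = Ps nu b n * q)%Z -> (Qs nu n <= q)%Z.
Proof.
  intros Hq E. apply Z.divide_pos_le; auto.
  apply Gauss with (Ps nu b n).
  - exists p. lia.
  - destruct (Qs_pow2 nu n) as [k [Hk ->]]. apply rel_prime_sym.
    apply Zpow_facts.rel_prime_Zpower_r; [lia|].
    apply rel_prime_sym, prime_rel_prime. apply prime_2.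
    intros [c Hc]. pose proof (Ps_odd nu b n) as HO. rewrite Hc in HO.
    rewrite Z.odd_mul in HO. simpl in HO. rewrite Bool.andb_false_r in HO. discriminate.
Qed.

Lemma key nu b p q w : 0 < nu -> (1 < q)%Z ->
  Rabs (xi nu b - IZR p / IZR q) < Rpower (IZR q) (- w) -> w < Rpower (IZR q) nu + 12.
Proof.
  intros Hnu Hq Happ.
  assert (Hqr : 2 <= IZR q) by (apply IZR_le; lia).
  pose proof (Rpower_pos (IZR q) nu).
  destruct (find_m nu (IZR q) Hqr) as [m [Hm1 Hm2]].
  destruct (xi_bounds nu b m) as [L U].
  pose proof (Qs_ge2R nu m) as HQ. pose proof (Qs_ge2R nu (S m)) as HQ'.
  set (x := xi nu b) in *. set (Q := IZR (Qs nu m)) in *. set (Q' := IZR (Qs nu (S m))) in *.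
  set (qr := IZR q) in *.
  destruct (Z.eq_dec (p * Qs nu m) (Ps nu b m * q)) as [E|E].
  -
    assert (Hle : (Qs nu m <= q)%Z) by (apply (Qs_div nu b m p q); lia).
    apply IZR_le in Hle. fold Q qr in Hle.
    assert (Hr : IZR p / qr = Ss nu b m).
    { unfold Ss. fold Q. apply (f_equal IZR) in E. rewrite !mult_IZR in E. fold Q qr in E.
      field_simplify_eq; lra. }
    rewrite Hr in Happ.
    assert (H1 : 1 / Q' <= Rabs (x - Ss nu b m)) by (rewrite Rabs_pos_eq; lra).
    set (e := eN nu (Qs nu m)).
    assert (HQe : Q' = Q ^ e) by (unfold Q', Q, e; apply Qs_S).
    assert (H2 : Rpower qr (- INR e) <= 1 / Q').
    { rewrite Rpower_Ropp, Rpower_pow by lra. rewrite HQe. unfold Rdiv. rewrite Rmult_1_l.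
      apply Rinv_le_contravar. apply pow_lt; lra. apply pow_incr. split; lra. }
    assert (- INR e < - w) by (apply (Rpower_inv_lt qr); lra).
    pose proof (eN_bounds nu (Qs nu m)). fold Q e in H3.
    pose proof (Rpower_base_le Q qr nu ltac:(lra) Hle ltac:(lra)). lra.
  - assert (Hz : 1 <= Rabs (IZR (p * Qs nu m - Ps nu b m * q))) by (apply Zabs_ge1; lia).
    rewrite minus_IZR, !mult_IZR in Hz. fold Q qr in Hz.
    assert (Hd : IZR p / qr - Ss nu b m = (IZR p * Q - IZR (Ps nu b m) * qr) / (qr * Q)).
    { unfold Ss. fold Q. field. lra. }
    assert (H1 : 1 / (qr * Q) <= Rabs (IZR p / qr - Ss nu b m)).
    { rewrite Hd. unfold Rdiv. rewrite Rabs_mult, Rabs_inv, (Rabs_pos_eq (qr * Q)) by nra.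
      apply Rmult_le_compat_r; [left; apply Rinv_0_lt_compat; nra| lra]. }
    assert (H2 : 6 / Q' < 1 / (2 * qr * Q)).
    { replace (1/(2*qr*Q)) with (6/(12*qr*Q)) by (field; lra).
      unfold Rdiv; apply Rmult_lt_compat_l; [lra|]; apply Rinv_lt_contravar; [|lra].
      assert (0 < 12*qr*Q) by (apply Rmult_lt_0_compat; lra). apply Rmult_lt_0_compat; lra. }
    assert (H3 : Rabs (x - Ss nu b m) <= 6 / Q') by (rewrite Rabs_pos_eq; [lra|]; assert (0 < 1/Q') by (apply Rdiv_lt_0_compat; lra); lra).
    assert (H4 : 1 / (2 * qr * Q) < Rabs (x - IZR p / qr)).
    { pose proof (Rabs_triang (IZR p / qr - x) (x - Ss nu b m)) as T.
      replace (IZR p / qr - x + (x - Ss nu b m)) with (IZR p / qr - Ss nu b m) in T by ring.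
      rewrite (Rabs_minus_sym (IZR p / qr) x) in T.
      assert (T2 : 1 / (qr * Q) = 2 * (1 / (2 * qr * Q))) by (field; lra).
      lra. }
    assert (H5 : Rpower qr (- 12) <= 1 / (2 * qr * Q)).
    { replace (- 12) with (- INR 12) by (simpl; lra). rewrite Rpower_Ropp, Rpower_pow by lra.
      unfold Rdiv. rewrite Rmult_1_l. apply Rinv_le_contravar. nra.
      assert (2 * qr * Q <= 288 * qr ^ 3) by (simpl in *; nra).
      assert (512 <= qr ^ 9).
      { replace 512 with (2 ^ 9) by (simpl; lra). apply pow_incr; split; lra. }
      assert (qr ^ 12 = qr ^ 9 * qr ^ 3) by ring.
      assert (0 < qr ^ 3) by (apply pow_lt; lra).
      nra. }
    assert (- 12 < - w) by (apply (Rpower_inv_lt qr); lra). lra.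
Qed.

Lemma upper_S nu b nu' : 0 < nu -> in_S (xi nu b) nu' -> nu' <= nu.
Proof.
  intros Hnu [H0 [p [q [w [[Aq [Aw Aa]] T]]]]].
  destruct (Rle_or_lt nu' nu) as [|Hlt]; auto. exfalso.
  destruct (T 13) as [N HN]. specialize (HN N (Nat.le_refl _)).
  specialize (Aq N). apply IZR_lt in Aq. destruct (Aa N) as [_ Ab].
  pose proof (key nu b (p N) (q N) (w N) Hnu ltac:(apply lt_IZR; lra) Ab).
  set (qr := IZR (q N)) in *.
  assert (Rpower qr nu <= Rpower qr nu') by (apply Rle_Rpower; lra).
  assert (1 <= Rpower qr nu') by (rewrite <- (Rpower_O qr) by lra; apply Rle_Rpower; lra).
  assert (w N / Rpower qr nu' <= 13).
  { apply (Rmult_le_reg_r (Rpower qr nu')). lra. unfold Rdiv. rewrite Rmult_assoc, Rinv_l by lra. lra. }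
  lra.
Qed.

Lemma nu_liouville_xi nu b : 0 < nu -> nu_liouville nu (xi nu b).
Proof.
  intro Hnu. split. apply liouville_xi; auto. split.
  - intros y Hy. apply (upper_S nu b); auto.
  - intros c Hc. destruct (Rle_or_lt nu c) as [|Hlt]; auto. exfalso.
    set (y := (Rmax c 0 + nu) / 2).
    assert (Rmax c 0 < nu) by (apply Rmax_lub_lt; lra).
    pose proof (Rmax_l c 0). pose proof (Rmax_r c 0).
    assert (in_S (xi nu b) y) by (apply lower_S; unfold y; lra).
    specialize (Hc y H2). unfold y in Hc. lra.
Qed.

Lemma Ps_ext nu b b' n : (forall k, (k <= n)%nat -> b k = b' k) -> Ps nu b n = Ps nu b' n.
Proof.
  induction n; intro H; simpl; unfold eps.
  - rewrite (H O) by lia. reflexivity.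
  - rewrite IHn by (intros; apply H; lia). rewrite (H (S n)) by lia. reflexivity.
Qed.

Lemma Ss_diff nu b b' m : (forall k, (k < m)%nat -> b k = b' k) ->
  Ss nu b m - Ss nu b' m = IZR (eps b m - eps b' m) / IZR (Qs nu m).
Proof.
  intro H. pose proof (Qs_ge2R nu m). destruct m.
  - unfold Ss; simpl. rewrite minus_IZR. field; lra.
  - rewrite !Ss_S. replace (Ss nu b' m) with (Ss nu b m) by (unfold Ss; rewrite (Ps_ext nu b b' m) by (intros; apply H; lia); reflexivity).
    rewrite minus_IZR. field; lra.
Qed.

Lemma xi_sep nu b b' m : (forall k, (k < m)%nat -> b k = b' k) -> b m = true -> b' m = false ->
  xi nu b' < xi nu b.
Proof.
  intros H Hb Hb'. pose proof (Ss_diff nu b b' m H). unfold eps in H0. rewrite Hb, Hb' in H0.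
  simpl in H0.
  destruct (xi_bounds nu b m) as [L _]. destruct (xi_bounds nu b' m) as [_ U].
  pose proof (Qs_ge2R nu m). destruct (Qs_growth2 nu m) as [_ G].
  set (Q := IZR (Qs nu m)) in *. set (Q' := IZR (Qs nu (S m))) in *.
  assert (5 / Q' <= 5 / (4 * Q)).
  { unfold Rdiv. apply Rmult_le_compat_l; [lra|]. apply Rinv_le_contravar; lra. }
  assert (5 / (4 * Q) < 2 / Q).
  { apply (Rmult_lt_reg_r (4 * Q)). lra. field_simplify; lra. }
  assert (6 / Q' = 1 / Q' + 5 / Q') by (field; lra).
  lra.
Qed.

Lemma xi_inj nu b b' : xi nu b = xi nu b' -> forall m, b m = b' m.
Proof.
  intro E.
  assert (forall m k, (k < m)%nat -> b k = b' k).
  { induction m; intros k Hk. lia.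
    destruct (Nat.eq_dec k m) as [->|Hne]; [|apply IHm; lia].
    destruct (b m) eqn:Hb, (b' m) eqn:Hb'; auto.
    - pose proof (xi_sep nu b b' m IHm Hb Hb'). lra.
    - assert (forall k, (k < m)%nat -> b' k = b k) by (intros; symmetry; auto).
      pose proof (xi_sep nu b' b m H Hb' Hb). lra. }
  intro m. apply (H (S m)). lia.
Qed.

Theorem theorem1 (nu : R) (hnu : 0 < nu) : ~ countable_set (nu_liouville nu).
Proof.
  intros [f Hf].
  set (d := fun m => if excluded_middle_informative (exists b, xi nu b = f m /\ b m = true) then false else true).
  destruct (Hf (xi nu d) (nu_liouville_xi nu d hnu)) as [n Hn].
  destruct (excluded_middle_informative (exists b, xi nu b = f n /\ b n = true)) as [[b [Eb Bn]]|Hno] eqn:Ed.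
  - assert (d n = false) by (unfold d; rewrite Ed; reflexivity).
    assert (xi nu b = xi nu d) by congruence.
    pose proof (xi_inj nu b d H0 n). congruence.
  - apply Hno. exists d. split; auto. unfold d. rewrite Ed. reflexivity.
Qed.
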